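(* Let $\overline{\mathscr{B}}\subset\mathcal{P}^{n-1}_r$ be a Borel set of monomials of degree $r$ in the variables $x_1,\ldots,x_n$, and let $\overline{\mathscr{N}}$ be its complement in $\mathcal{P}^{n-1}_r$. Let $\mathscr{N}\subset\mathcal{P}^n_r$ be the set of all monomials of degree $r$ in $x_0,\ldots,x_n$ that can be obtained from some element of $\overline{\mathscr{N}}$ by applying a finite (possibly empty) sequence of decreasing elementary moves. Then $$\mathscr{N}=\mathcal{P}^n_r\setminus\Big\{\big(\langle\overline{\mathscr{B}}\rangle^{\mathrm{sat}}\cdot\mathbb{K}[x_0,\ldots,x_n]\big)_r\Big\},$$ where $\langle\overline{\mathscr{B}}\rangle^{\mathrm{sat}}$ is the saturation of the ideal generated by $\overline{\mathscr{B}}$ in $\mathbb{K}[x_1,\ldots,x_n]$ and $\{(\cdot)_r\}$ denotes the set of monomials of degree $r$ in an ideal.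
   Context: Variables are ordered $x_n>\cdots>x_0$. $\mathcal{P}^n_r$ is the set of monomials of degree $r$ in $x_0,\ldots,x_n$, and $\mathcal{P}^{n-1}_r$ is identified with the set of monomials of degree $r$ in $x_1,\ldots,x_n$. A decreasing elementary move on a monomial $x^\alpha$ is the multiplication by $\frac{x_{j-1}}{x_j}$ for some $j\geq1$ with $x_j\mid x^\alpha$; an increasing elementary move is multiplication by $\frac{x_{i+1}}{x_i}$ with $x_i\mid x^\alpha$. A Borel set is a set of monomials of a fixed degree closed under increasing elementary moves. Saturation in $\mathbb{K}[x_1,\ldots,x_n]$ is with respect to the ideal $(x_1,\ldots,x_n)$. *)

(* Defs.v *)
From HB Require Import structures.
From mathcomp Require Import all_boot all_order all_algebra.
From Stdlib Require Import Relations.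
From Stdlib Require List.
Set Implicit Arguments. Unset Strict Implicit. Unset Printing Implicit Defensive.
Import GRing.Theory.
Local Open Scope ring_scope.

(* Exponent vectors of monomials in the variables x_0,...,x_n
   (index i : 'I_n.+1 stands for the variable x_i). *)
Definition mon (n : nat) := {ffun 'I_n.+1 -> nat}.

Definition mdeg n (a : mon n) : nat := (\sum_(i < n.+1) a i)%N.

Definition no_x0 n (a : mon n) : Prop := a ord0 = 0%N.

(* P^n_r and (the identification of) P^{n-1}_r *)
Definition inPn n r (a : mon n) : Prop := mdeg a = r.
Definition inPn1 n r (a : mon n) : Prop := mdeg a = r /\ no_x0 a.

Definition mmul n (a b : mon n) : mon n := [ffun k => (a k + b k)%N].

(* decreasing elementary move: multiply by x_{j-1}/x_j, j >= 1, x_j | x^a *)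
Definition dec_move n (a b : mon n) : Prop :=
  exists i j : 'I_n.+1, nat_of_ord j = (nat_of_ord i).+1 /\ (0 < a j)%N /\
    b = [ffun k => (a k + (k == i) - (k == j))%N].

(* increasing elementary move: multiply by x_{i+1}/x_i with x_i | x^a *)
Definition inc_move n (a b : mon n) : Prop :=
  exists i j : 'I_n.+1, nat_of_ord j = (nat_of_ord i).+1 /\ (0 < a i)%N /\
    b = [ffun k => (a k + (k == j) - (k == i))%N].

Definition borel n r (B : mon n -> Prop) : Prop :=
  (forall a, B a -> inPn1 r a) /\ (forall a b, B a -> inc_move a b -> B b).

(* A polynomial is represented by a finite formal sum of terms (c, x^a);
   two representations are equal as polynomials iff they have the same
   coefficient function. *)
Definition mpoly (K : fieldType) n := seq (K * mon n)%type.

Definition coef (K : fieldType) n (p : mpoly K n) (a : mon n) : K :=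
  \sum_(c <- p | c.2 == a) c.1.

Definition peq (K : fieldType) n (p q : mpoly K n) : Prop :=
  forall a, coef p a = coef q a.

Definition pmul (K : fieldType) n (p q : mpoly K n) : mpoly K n :=
  [seq (c.1 * d.1, mmul c.2 d.2) | c <- p, d <- q].

Definition monp (K : fieldType) n (a : mon n) : mpoly K n := [:: (1, a)].
Arguments monp K {n} a.

(* p belongs to the subring K[x_1,...,x_n] *)
Definition in_sub (K : fieldType) n (p : mpoly K n) : Prop :=
  forall a, coef p a != 0 -> no_x0 a.

Definition in_all (K : fieldType) n (p : mpoly K n) : Prop := True.

Definition lin_comb (K : fieldType) n (hs : seq (mpoly K n * mpoly K n)%type) : mpoly K n :=
  flatten [seq pmul h.1 h.2 | h <- hs].

(* ideal generated by the set S of polynomials inside the ring R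
   (R = K[x_1..x_n] via in_sub, or K[x_0..x_n] via in_all) *)
Definition gen_ideal (K : fieldType) n (R : mpoly K n -> Prop)
    (S : mpoly K n -> Prop) (f : mpoly K n) : Prop :=
  R f /\ exists hs : seq (mpoly K n * mpoly K n)%type,
    List.Forall (fun h => R h.1 /\ S h.2) hs /\ peq f (lin_comb hs).

Definition mon_ideal (K : fieldType) n (B : mon n -> Prop) : mpoly K n -> Prop :=
  gen_ideal (@in_sub K n) (fun g => exists b, B b /\ g = monp K b).

Arguments mon_ideal K {n} B.

(* (x_1,...,x_n)^k in K[x_1..x_n], generated by the degree k monomials *)
Definition irr_pow (K : fieldType) n (k : nat) : mpoly K n -> Prop :=
  gen_ideal (@in_sub K n)
    (fun g => exists u : mon n, mdeg u = k /\ no_x0 u /\ g = monp K u).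

Arguments irr_pow K {n} k.

Definition saturation (K : fieldType) n (I : mpoly K n -> Prop) (f : mpoly K n) : Prop :=
  in_sub f /\ exists k, forall g, irr_pow K k g -> I (pmul f g).

Definition ext_ideal (K : fieldType) n (J : mpoly K n -> Prop) : mpoly K n -> Prop :=
  gen_ideal (@in_all K n) J.

(* Main.v *)
Require Import Defs.
From mathcomp Require Import all_boot all_order all_algebra.
From Stdlib Require Import Relations.
From mathcomp Require Import zify.
Set Implicit Arguments. Unset Strict Implicit. Unset Printing Implicit Defensive.
Import GRing.Theory.

Section Poly.
Variables (K : fieldType) (n : nat).
Local Open Scope ring_scope.

Definition mle (m a : mon n) : bool := [forall k, (m k <= a k)%N].
Definition msub (a m : mon n) : mon n := [ffun k => (a k - m k)%N].

Lemma mmul_eq m d a : (mmul m d == a) = mle m a && (d == msub a m).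
Proof.
apply/eqP/andP.
- move=> <-; split; first by apply/forallP=> k; rewrite ffunE leq_addr.
  by apply/eqP/ffunP=> k; rewrite !ffunE addKn.
- case=> /forallP H /eqP ->; apply/ffunP=> k; rewrite !ffunE subnKC //.
Qed.

Lemma coef_cons (x : K * mon n) p a :
  coef (x :: p) a = (if x.2 == a then x.1 else 0) + coef p a.
Proof. by rewrite /coef big_cons; case: ifP; rewrite ?add0r. Qed.

Lemma coef_nil a : coef ([::] : mpoly K n) a = 0.
Proof. by rewrite /coef big_nil. Qed.

Lemma coef_cat (p q : mpoly K n) a : coef (p ++ q) a = coef p a + coef q a.
Proof. by rewrite /coef big_cat. Qed.

Lemma coef_map_mul (c : K * mon n) (q : mpoly K n) a :
 coef [seq (c.1 * d.1, mmul c.2 d.2) | d <- q] a =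
   c.1 * (if mle c.2 a then coef q (msub a c.2) else 0).
Proof.
elim: q => [|d q IH]; first by rewrite !coef_nil; case: ifP; rewrite mulr0.
rewrite /= !coef_cons IH /= mmul_eq.
case: (mle c.2 a) => /=; last by rewrite !mulr0 add0r.
by rewrite mulrDr; case: ifP; rewrite ?mulr0.
Qed.

Lemma pmul_cons (c : K * mon n) p q :
  pmul (c :: p) q = [seq (c.1 * d.1, mmul c.2 d.2) | d <- q] ++ pmul p q.
Proof. by []. Qed.

Lemma coef_pmul_nz (p q : mpoly K n) a : coef (pmul p q) a != 0 ->
  exists m, mle m a /\ coef q (msub a m) != 0.
Proof.
elim: p => [|c p IH]; first by rewrite coef_nil eqxx.
rewrite pmul_cons coef_cat coef_map_mul.
case E: (mle c.2 a); last by rewrite mulr0 add0r.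
have [H|H] := eqVneq (coef q (msub a c.2)) 0.
  by rewrite H mulr0 add0r.
by move=> _; exists c.2.
Qed.

Lemma pmul_monpl (c : mon n) (q : mpoly K n) :
  pmul (monp K c) q = [seq (1 * d.1, mmul c d.2) | d <- q].
Proof. by rewrite pmul_cons cats0. Qed.

Lemma coef_pmul_monpl (c : mon n) (q : mpoly K n) a :
  coef (pmul (monp K c) q) a = if mle c a then coef q (msub a c) else 0.
Proof. by rewrite pmul_monpl (coef_map_mul (1, c)) mul1r. Qed.

Lemma coef_monp (b a : mon n) : coef (monp K b) a = if b == a then 1 else 0.
Proof. by rewrite /monp coef_cons coef_nil addr0. Qed.

Lemma mmul_inj_r u : injective (fun m : mon n => mmul m u).
Proof.
move=> m1 m2 /= /ffunP H; apply/ffunP=> k; have := H k.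
by rewrite !ffunE => /eqP; rewrite eqn_add2r => /eqP.
Qed.

Lemma coef_pmul_monpr (p : mpoly K n) (u m : mon n) :
  coef (pmul p (monp K u)) (mmul m u) = coef p m.
Proof.
elim: p => [|c p IH]; first by rewrite !coef_nil.
rewrite pmul_cons /= !coef_cons IH mulr1.
by rewrite (inj_eq (@mmul_inj_r u)).
Qed.

Lemma coef_lin_comb_nz (hs : seq (mpoly K n * mpoly K n)) a : coef (lin_comb hs) a != 0 ->
  exists h, List.In h hs /\ coef (pmul h.1 h.2) a != 0.
Proof.
elim: hs => [|h hs IH]; first by rewrite /lin_comb /= coef_nil eqxx.
rewrite /lin_comb /= coef_cat.
have [H|H] := eqVneq (coef (pmul h.1 h.2) a) 0.
  rewrite H add0r => /IH [h' [H1 H2]]; exists h'; split => //; by right.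
by move=> _; exists h; split => //; left.
Qed.

Lemma pmul_monpl_cat (c : mon n) (p q : mpoly K n) :
  pmul (monp K c) (p ++ q) = pmul (monp K c) p ++ pmul (monp K c) q.
Proof. by rewrite !pmul_monpl map_cat. Qed.

Lemma pmul_monpl_comm (c : mon n) (p q : mpoly K n) :
  pmul (monp K c) (pmul p q) = pmul p (pmul (monp K c) q).
Proof.
elim: p => [|x p IH]; first by rewrite pmul_monpl.
rewrite pmul_cons pmul_monpl_cat IH pmul_cons; congr (_ ++ _).
rewrite !pmul_monpl -!map_comp; apply: eq_map => d /=.
congr pair; first by rewrite !mul1r.
by apply/ffunP=> k; rewrite !ffunE addnCA.
Qed.

Lemma pmul_monpl_lin (c : mon n) (hs : seq (mpoly K n * mpoly K n)) :
  pmul (monp K c) (lin_comb hs) =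
  lin_comb [seq (h.1, pmul (monp K c) h.2) | h <- hs].
Proof.
elim: hs => [|h hs IH]; first by rewrite pmul_monpl.
rewrite /lin_comb /= pmul_monpl_cat -/(lin_comb hs) IH pmul_monpl_comm //.
Qed.

End Poly.

Section Comb.
Variables (n : nat).

Definition mv (x : mon n) (i j : 'I_n.+1) : mon n :=
  [ffun k => x k + (k == i) - (k == j)].

Lemma mv1 (x : mon n) i j : i != j -> mv x i j i = x i + 1.
Proof. by move=> H; rewrite ffunE eqxx (negbTE H) subn0. Qed.
Lemma mv2 (x : mon n) i j : i != j -> mv x i j j = x j - 1.
Proof. by move=> H; rewrite ffunE eqxx eq_sym (negbTE H) addn0. Qed.
Lemma mv3 (x : mon n) i j k : k != i -> k != j -> mv x i j k = x k.
Proof. by move=> H1 H2; rewrite ffunE (negbTE H1) (negbTE H2) addn0 subn0. Qed.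

Lemma mv_sum (w : 'I_n.+1 -> nat) (x : mon n) i j : i != j -> 0 < x j ->
  \sum_k w k * mv x i j k + w j = \sum_k w k * x k + w i.
Proof.
move=> Hij Hx.
have Hw : forall l, \sum_(k < n.+1) w k * (k == l) = w l.
  move=> l; rewrite (bigD1 l) //= eqxx muln1 big1 ?addn0 // => k /negbTE ->.
  by rewrite muln0.
rewrite -(Hw j) -(Hw i) -!big_split /=; apply: eq_bigr => k _.
rewrite -!mulnDr; congr (_ * _).
have [->|ki] := eqVneq k i; first by rewrite mv1 // (negbTE Hij) /=; lia.
have [->|kj] := eqVneq k j; first by rewrite mv2 //=; lia.
by rewrite mv3.
Qed.

Lemma mv_deg (x : mon n) i j : i != j -> 0 < x j -> mdeg (mv x i j) = mdeg x.
Proof.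
move=> Hij Hx; have := mv_sum (fun _ => 1) Hij Hx.
rewrite /mdeg !(eq_bigr _ (fun k _ => mul1n _)).
by move/eqP; rewrite eqn_add2r => /eqP.
Qed.

Variable (Hn : 1 <= n).
Definition ione : 'I_n.+1 := @Ordinal n.+1 1 Hn.

Lemma ord_cases (l : 'I_n.+1) : l = ord0 \/ l = ione \/ 2 <= l.
Proof.
case: l => [[|[|l']] Hl]; [left; exact: val_inj | right; left; exact: val_inj | by right; right].
Qed.

Lemma one_neq0 : (ione != ord0).
Proof. by apply/eqP => /(congr1 val). Qed.

Lemma ge2_neq (k : 'I_n.+1) : 2 <= k -> (k != ione) && (k != ord0).
Proof. by move=> H; apply/andP; split; apply/eqP => E; rewrite E in H. Qed.

Variables (r : nat) (Bbar : mon n -> Prop) (HB : borel r Bbar).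

Definition Pp (a : mon n) := exists b, Bbar b /\ forall k : 'I_n.+1, 2 <= k -> b k <= a k.

Lemma Pp_back x y : dec_move x y -> Pp y -> Pp x.
Proof.
case=> i [j [Hij [Hxj ->]]] [b [Bb Hb]].
have ij : i != j by apply/eqP => E; move: Hij; rewrite E; lia.
have ji : j != i by rewrite eq_sym.
case: (boolP ((2 <= i) && (x i < b i))).
- case/andP => Hi2 Hlt; exists (mv b j i); split.
  + apply: (HB.2 b _ Bb); exists i, j; split; [exact Hij|split]; [lia|reflexivity].
  + move=> k Hk; have := Hb k Hk.
    have [->|ki] := eqVneq k i; first by rewrite mv1 // mv2 //; lia.
    have [->|kj] := eqVneq k j; first by rewrite mv1 // mv2 //; lia.
    by rewrite !mv3 // eq_sym.
- move=> H; exists b; split => // k Hk; have := Hb k Hk.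
  have [Eki|ki] := eqVneq k i.
    subst k; rewrite mv1 //; move: H; rewrite Hk /=; lia.
  have [->|kj] := eqVneq k j; first by rewrite mv2 //; lia.
  by rewrite !mv3.
Qed.

Lemma Pp_rt b a : clos_refl_trans (mon n) (@dec_move n) b a -> Pp a -> Pp b.
Proof.
elim=> [x y H|x|x y z _ IH1 _ IH2]; [exact: Pp_back|done|].
by move=> H; apply: IH1; apply: IH2.
Qed.

Definition W (m : mon n) := \sum_(k < n.+1) k.-1 * m k.

Lemma L_up b m : Bbar b -> mdeg m = r -> no_x0 m ->
  (forall k : 'I_n.+1, 2 <= k -> b k <= m k) -> Bbar m.
Proof.
move=> Bb.
have [Hbd Hb0] := HB.1 b Bb.
suff: forall N m, W m < N -> mdeg m = r -> no_x0 m ->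
  (forall k : 'I_n.+1, 2 <= k -> b k <= m k) -> Bbar m.
  by move=> H; apply: (H (W m).+1).
elim=> [//|N IH] {}m HW Hd H0 Hge.
case: (boolP [exists k : 'I_n.+1, (2 <= k) && (b k < m k)]).
- case/existsP=> k /andP [Hk2 Hlt].
  have Hk1 : k.-1 < n.+1 by apply: leq_ltn_trans (leq_pred k) (ltn_ord k).
  pose k1 := Ordinal Hk1.
  have Ek1 : nat_of_ord k1 = k.-1 by [].
  clearbody k1.
  have k1k : k1 != k by apply/eqP => /(congr1 val) /=; lia.
  have kk1 : k != k1 by rewrite eq_sym.
  have Hmk : 0 < m k by lia.
  have Bm'' : Bbar (mv m k1 k).
    apply: (IH); first 2 last.
    + rewrite /no_x0 mv3 //; apply/eqP => /(congr1 val) /=; lia.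
    + move=> l Hl; have := Hge l Hl.
      have [->|lk1] := eqVneq l k1; first by rewrite mv1 //; lia.
      have [->|lk] := eqVneq l k; first by rewrite mv2 //; lia.
      by rewrite mv3.
    + have := mv_sum (fun k => k.-1) k1k Hmk; rewrite /W /= in HW *; lia.
    + by rewrite mv_deg.
  have -> : m = mv (mv m k1 k) k k1.
    apply/ffunP => l.
    have [->|lk1] := eqVneq l k1; first by rewrite mv2 // mv1 // addnK.
    have [->|lk] := eqVneq l k; first by rewrite mv1 // mv2 // subnK.
    by rewrite !mv3.
  apply: (HB.2 _ _ Bm''); exists k1, k; split; first by rewrite /=; lia.
  by split; [rewrite mv1 //; lia | reflexivity].
- rewrite negb_exists => /forallP Hn'.
  have Heq : forall k : 'I_n.+1, 2 <= k -> m k = b k.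
    move=> k Hk; have := Hn' k; have := Hge k Hk; rewrite Hk /=; lia.
  have Hrest : \sum_(l < n.+1 | l != ione) m l = \sum_(l < n.+1 | l != ione) b l.
    apply: eq_bigr => l Hl; case: (ord_cases l) => [->|[E|E]].
    + by rewrite H0 Hb0.
    + by rewrite E eqxx in Hl.
    + exact: Heq.
  have Hone : m ione = b ione.
    move: Hd Hbd; rewrite /mdeg (bigD1 ione) //= (bigD1 ione (P := xpredT)) //= Hrest.
    move=> H1 H2; apply/eqP; rewrite -(eqn_add2r (\sum_(l < n.+1 | l != ione) b l)) H1 -H2; exact: eqxx.
  suff -> : m = b by [].
  apply/ffunP => l; case: (ord_cases l) => [->|[->|E]].
  + by rewrite H0 Hb0.
  + exact: Hone.
  + exact: Heq.
Qed.

Lemma path_x0 t (a : mon n) : a ord0 = t -> exists c, no_x0 c /\ mdeg c = mdeg a /\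
  (forall k : 'I_n.+1, 2 <= k -> c k = a k) /\ clos_refl_trans (mon n) (@dec_move n) c a.
Proof.
elim: t a => [|t IH] a Ha.
  by exists a; split => //; split => //; split => //; apply: rt_refl.
have Ha0 : 0 < a ord0 by rewrite Ha.
have [c [Hc0 [Hcd [Hck Hrt]]]] := IH (mv a ione ord0) (ltac:(rewrite mv2 ?one_neq0 // Ha; lia)).
exists c; split => //; split; first by rewrite Hcd mv_deg // one_neq0.
split.
  move=> k Hk; rewrite Hck // mv3 //; by case/andP: (ge2_neq Hk).
apply: rt_trans Hrt _; apply: rt_step.
exists ord0, ione; split => //; split; first by rewrite mv1 ?one_neq0 //; lia.
apply/ffunP => l; rewrite -/(mv _ ord0 ione _).
have n0 : (ord0 : 'I_n.+1) != ione by rewrite eq_sym one_neq0.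
case: (ord_cases l) => [->|[->|E]].
+ by rewrite mv1 // mv2 ?one_neq0 // subnK.
+ by rewrite mv2 // mv1 ?one_neq0 // addnK.
+ by case/andP: (ge2_neq E) => E1 E2; rewrite !mv3.
Qed.

End Comb.

Section Main.
Variables (K : fieldType) (n : nat) (Hn : (1 <= n)%N) (r : nat)
  (Bbar : mon n -> Prop) (HB : borel r Bbar).
Local Open Scope ring_scope.

Lemma in_sub_monp (u : mon n) : no_x0 u -> in_sub (monp K u).
Proof. by move=> H l; rewrite coef_monp; case: (u =P l) => [<-|] //; rewrite eqxx. Qed.

Lemma sat_Pp (f : mpoly K n) m : saturation (mon_ideal K Bbar) f -> coef f m != 0 ->
  Pp Bbar m.
Proof.
case=> Hin [k Hk] Hnz.
pose u : mon n := [ffun l => if l == ione Hn then k else 0%N].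
have Hu0 : no_x0 u by rewrite /no_x0 ffunE eq_sym (negbTE (one_neq0 Hn)).
have Hg : irr_pow K k (monp K u).
  split; first exact: in_sub_monp.
  pose z : mon n := [ffun => 0%N].
  exists [:: (monp K z, monp K u)]; split.
    constructor; last by constructor.
    split; first by apply: in_sub_monp; rewrite /no_x0 ffunE.
    exists u; split; last by split.
    rewrite /mdeg (bigD1 (ione Hn)) //= big1 ?ffunE ?eqxx ?addn0 // => l /negbTE.
    by rewrite ffunE => ->.
  move=> l; rewrite /lin_comb /= mul1r.
  have -> : mmul z u = u by apply/ffunP => l'; rewrite !ffunE add0n.
  by [].
have [_ [hs [Hf Hpeq]]] := Hk _ Hg.
have : coef (lin_comb hs) (mmul m u) != 0 by rewrite -Hpeq coef_pmul_monpr.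
case/coef_lin_comb_nz => h [Hin' Hnz'].
have [_ [b [Bb Eb]]] := proj1 (List.Forall_forall _ _) Hf h Hin'.
rewrite Eb in Hnz'.
case/coef_pmul_nz: Hnz' => m1 [Hle]; rewrite coef_monp.
case: (b =P _) => [Eb2 _|]; last by rewrite eqxx.
exists b; split => // l Hl.
rewrite Eb2 !ffunE.
case: eqP => [E|_]; first by rewrite E in Hl.
by rewrite addn0 leq_subr.
Qed.

Lemma ext_Pp a : ext_ideal (saturation (mon_ideal K Bbar)) (monp K a) -> Pp Bbar a.
Proof.
case=> _ [hs [Hf Hpeq]].
have : coef (lin_comb hs) a != 0 by rewrite -Hpeq coef_monp eqxx oner_neq0.
case/coef_lin_comb_nz => h [Hin Hnz].
have [_ Hsat] := proj1 (List.Forall_forall _ _) Hf h Hin.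
case/coef_pmul_nz: Hnz => m [Hle Hq].
have [b [Bb Hb]] := sat_Pp Hsat Hq.
exists b; split => // k Hk; apply: leq_trans (Hb k Hk) _.
by rewrite ffunE leq_subr.
Qed.

Lemma Pp_ext a : Pp Bbar a -> ext_ideal (saturation (mon_ideal K Bbar)) (monp K a).
Proof.
case=> b [Bb Hb].
have [Hbd Hb0] := HB.1 b Bb.
pose c : mon n := [ffun k : 'I_n.+1 => if (2 <= k)%N then b k else 0%N].
have Hc0 : no_x0 c by rewrite /no_x0 ffunE.
have Hca : mle c a.
  by apply/forallP => k; rewrite ffunE; case: ifP => // /Hb.
have Hcb : forall l : 'I_n.+1, l != ione Hn -> c l = b l.
  move=> l Hl; rewrite ffunE; case: (ord_cases Hn l) => [E|[E|E]].
  - by rewrite E /= Hb0.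
  - by rewrite E eqxx in Hl.
  - by rewrite E.
have Hdc : (mdeg c + b (ione Hn) = r)%N.
  rewrite -Hbd /mdeg (bigD1 (ione Hn) (P := xpredT)) //= addnC.
  rewrite [X in _ = X](bigD1 (ione Hn)) //= (eq_bigr _ (fun l Hl => Hcb l Hl)).
  by rewrite /c ffunE /= add0n.
split => //.
exists [:: (monp K (msub a c), monp K c)]; split.
  constructor; last by constructor.
  split => //; split; first exact: in_sub_monp.
  exists (b (ione Hn)) => g [Hg [hs [Hf Hpeq]]].
  split.
    move=> l; rewrite coef_pmul_monpl; case: ifP => Hle; last by rewrite eqxx.
    move/Hg; rewrite /no_x0 !ffunE /=; lia.
  exists [seq (h.1, pmul (monp K c) h.2) | h <- hs]; split.
    apply/List.Forall_forall => h' /List.in_map_iff [h [<- Hin]].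
    have [Hh1 [u [Hu1 [Hu2 Hu3]]]] := proj1 (List.Forall_forall _ _) Hf h Hin.
    split; first exact: Hh1.
    exists (mmul c u); split.
      apply: (L_up Hn HB Bb).
      - have -> : mdeg (mmul c u) = (mdeg c + mdeg u)%N.
          by rewrite /mdeg -big_split; apply: eq_bigr => k _; rewrite ffunE.
        rewrite Hu1; lia.
      - by rewrite /no_x0 ffunE Hc0 Hu2.
      - by move=> k Hk; rewrite !ffunE Hk leq_addr.
    by rewrite Hu3 pmul_monpl /= mul1r.
  move=> l; rewrite coef_pmul_monpl Hpeq -coef_pmul_monpl pmul_monpl_lin //.
move=> l; rewrite /lin_comb /= mul1r.
have -> : mmul (msub a c) c = a.
  apply/ffunP => k; rewrite !ffunE subnK //; move/forallP: Hca => /(_ k); rewrite ffunE.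
by [].
by []. Qed.

End Main.

Theorem lemma4p1 (K : fieldType) (n r : nat) (Hn : (1 <= n)%N)
    (Bbar : mon n -> Prop) (HB : borel r Bbar) :
  let Nbar := fun a : mon n => inPn1 r a /\ ~ Bbar a in
  let N := fun a : mon n =>
    inPn r a /\ exists b, Nbar b /\ clos_refl_trans (mon n) (@dec_move n) b a in
  forall a : mon n,
    N a <->
    (inPn r a /\
     ~ ext_ideal (saturation (mon_ideal K Bbar)) (monp K a)).
Proof.
move=> Nbar N a; split.
- case=> Ha [b [[[Hbd Hb0] Hnb] Hrt]]; split => // Hext.
  have := Pp_rt Hn HB Hrt (ext_Pp Hn Hext) => -[b' [Bb' Hb']].
  exact: Hnb (L_up Hn HB Bb' Hbd Hb0 Hb').
- case=> Ha Hnext; split => //.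
  have [c [Hc0 [Hcd [Hck Hrt]]]] := path_x0 Hn (erefl (a ord0)).
  exists c; split => //; split; first by split => //; rewrite Hcd.
  move=> Bc; apply: Hnext; apply: (Pp_ext K Hn HB); exists c; split => // k Hk.
  by rewrite Hck.
Qed.
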